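(* For any alphabet size $q\ge2$ and any $i\in\{1,2,\dots,q\}$, no infinite family of $q$-ary codes with rate bounded away from zero is list-decodable (with list size $2^{o(n)}$, $n$ the block length) from a $\delta=\frac{q-i}{q}$ fraction of deletions and a $\gamma=\frac{i(i-1)}{q}$ fraction of insertions.
   Context: A $q$-ary code of block length $n$ is $C\subseteq\Sigma^n$ with $|\Sigma|=q$, rate $\log_q|C|/n$. $C$ is $L$-list decodable from $\delta n$ deletions and $\gamma n$ insertions if every string $y$ can be obtained from at most $L$ codewords by at most $\delta n$ deletions and at most $\gamma n$ insertions (deleting symbols of the codeword and inserting arbitrary symbols at arbitrary positions). *)

(* Defs.v *)
From mathcomp Require Import all_boot.
Set Implicit Arguments. Unset Strict Implicit. Unset Printing Implicit Defensive.

Definition frac_le (k num den n : nat) : Prop := k * den <= num * n.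

(* Deleting symbols of x and inserting arbitrary symbols at arbitrary positions
   yields y iff there is a common subsequence z of x and y; the number of
   deletions is |x| - |z| and the number of insertions is |y| - |z|. *)
Definition obtainable (T : eqType) (N dn dd inn idd : nat) (x y : seq T) : Prop :=
  exists z : seq T, [/\ subseq z x, subseq z y,
                        frac_le (size x - size z) dn dd N &
                        frac_le (size y - size z) inn idd N].

Definition list_decodable (q N : nat) (C : {set N.-tuple 'I_q}) (L : nat)
  (dn dd inn idd : nat) : Prop :=
  forall (y : seq 'I_q) (S : {set N.-tuple 'I_q}),
    S \subset C ->
    (forall c, c \in S -> obtainable N dn dd inn idd (tval c) y) ->
    #|S| <= L.

(* Main.v *)
Require Import Defs.
From mathcomp Require Import all_boot zify.
Set Implicit Arguments. Unset Strict Implicit. Unset Printing Implicit Defensive.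

Lemma count_sum (q : nat) (B : {set 'I_q}) (x : seq 'I_q) :
  count (mem B) x = \sum_(b in B) count (pred1 b) x.
Proof.
elim: x => [|a x IH] /=; first by rewrite big1.
rewrite big_split /= -IH; congr (_ + _).
case: (boolP (a \in B)) => aB.
  rewrite (bigD1 a) //= eqxx big1 // => b /andP[_ /negPf]; by rewrite eq_sym => ->.
by rewrite big1 // => b bB; case: eqP => // E; rewrite E bB in aB.
Qed.

Lemma avg (q : nat) (B : {set 'I_q}) (g : 'I_q -> nat) :
  0 < #|B| -> exists2 b, b \in B & \sum_(c in B) g c <= g b * #|B|.
Proof.
move=> hB.
case: (boolP [exists b in B, \sum_(c in B) g c <= g b * #|B|]).
  by case/exists_inP=> b bB h; exists b.
rewrite negb_exists_in => /forall_inP H.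
have: \sum_(c in B) g c * #|B| < \sum_(c in B) \sum_(d in B) g d.
  case/card_gt0P: hB => b0 b0B.
  rewrite (bigD1 b0) //= [X in _ < X](bigD1 b0) //=.
  rewrite -addSn leq_add //; first by rewrite ltnNge H.
  apply: leq_sum => c /andP[cB _]; by rewrite ltnW // ltnNge H.
by rewrite -big_distrl /= sum_nat_const mulnC ltnn.
Qed.

Lemma exA (q : nat) (x : seq 'I_q) (j : nat) : j <= q ->
  exists A : {set 'I_q}, #|A| = j /\ j * size x <= count (mem A) x * q.
Proof.
elim: j => [|j IH] hj.
  by exists set0; rewrite cards0.
have [A [cA hA]] := IH (ltnW hj).
have hB : 0 < #|~: A| by rewrite cardsCs setCK card_ord; lia.
have [b bB hb] := @avg _ _ (fun b => count (pred1 b) x) hB.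
rewrite -count_sum in hb.
have bA : b \notin A by rewrite inE in bB.
exists (b |: A); split; first by rewrite cardsU1 bA cA.
have E : count (mem (b |: A)) x = count (pred1 b) x + count (mem A) x.
  rewrite -count_predUI.
  have -> : count (predI (pred1 b) (mem A)) x = 0.
    apply/eqP; rewrite -leqn0 leqNgt -has_count; apply/hasPn => y _ /=.
    by apply/negP => /andP[/eqP -> ]; apply/negP.
  by rewrite addn0; apply: eq_count => y; rewrite !inE.
have E2 : count (mem (~: A)) x = size x - count (mem A) x.
  rewrite -(count_predC (mem A) x) addKn; apply: eq_count => y; by rewrite !inE.
rewrite E2 cardsCs setCK card_ord cA in hb.
rewrite E.
have hc : count (mem A) x <= size x by apply: count_size.
set c := count (mem A) x in hA hb hc *; set d := count (pred1 b) x in hb *.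
set n := size x in hA hb hc *.
have hm : 0 < q - j by lia.
rewrite -(leq_pmul2r hm).
nia.
Qed.

Lemma flat_sub (q : nat) (A : {set 'I_q}) (w : seq 'I_q) m :
  all (mem A) w -> size w <= m -> subseq w (flatten (nseq m (enum A))).
Proof.
elim: w m => [|a w IH] [|m] //=; first by rewrite sub0seq.
case/andP=> aA hw hs.
rewrite -cat1s; apply: cat_subseq; last by apply: IH.
by rewrite sub1seq mem_enum.
Qed.

Lemma size_flat (T : Type) (s : seq T) m : size (flatten (nseq m s)) = m * size s.
Proof. by elim: m => //= m IH; rewrite size_cat IH mulSn. Qed.

Definition tt_ (q i n : nat) := (i * n + q - 1) %/ q.
Definition yy (q : nat) (t : nat) (A : {set 'I_q}) (s : 'I_q) :=
  flatten (nseq t.-1 (enum A)) ++ [:: s].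
Definition keyb (q i : nat) (x : seq 'I_q) (p : {set 'I_q} * 'I_q) :=
  [&& #|p.1| == i, i * size x <= count (mem p.1) x * q &
     p.2 == last p.2 (filter (mem p.1) x)].

Lemma obt (q i n : nat) (x : seq 'I_q) A s : 1 <= i <= q -> 0 < n -> size x = n ->
  keyb i x (A, s) ->
  obtainable n (q - i) q (i * (i - 1)) q x (yy (tt_ q i n) A s).
Proof.
move=> /andP[hi hiq] hn hx /and3P[/eqP cA hc /eqP hs]; rewrite /= in cA hc hs.
set t := tt_ q i n.
have ht1 : t * q >= i * n by rewrite /t /tt_; lia.
have ht2 : t * q < i * n + q by rewrite /t /tt_; lia.
have ht0 : 0 < t by rewrite /t /tt_; lia.
set f := filter (mem A) x.
have hcf : size f = count (mem A) x by rewrite size_filter.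
have htc : t <= size f.
  rewrite hcf; rewrite hx in hc; have hq : 0 < q by lia.
  rewrite -ltnS -(ltn_pmul2r hq) mulSn; apply: (leq_trans ht2); by rewrite addnC leq_add2l.
have hfx : size f <= n by rewrite -hx size_filter count_size.
set z := drop (size f - t) f.
have hz : size z = t.
  rewrite size_drop; lia.
exists z; split.
- exact: subseq_trans (drop_subseq _ _) (filter_subseq _ _).
- rewrite /yy.
  have hl : last s z = s.
    have -> : last s z = last s f.
      rewrite -(cat_take_drop (size f - t) f) last_cat -/z.
      have lw : forall a b (w : seq 'I_q), 0 < size w -> last a w = last b w by move=> a b [].
      by apply: lw; rewrite hz.
    by rewrite /f -hs.
  have hall : all (mem A) z.
    by apply/allP => y /mem_drop; rewrite mem_filter => /andP[].
  move: hall hl hz; case/lastP: z => [|w a] /=; first by move=> _ _ E; rewrite -E in ht0.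
  rewrite last_rcons all_rcons => /andP[_ hw] -> hsz.
  rewrite -cats1; apply: cat_subseq => //.
  by apply: flat_sub => //; rewrite size_rcons in hsz; lia.
- by rewrite /frac_le hx hz; nia.
- rewrite /frac_le hz size_cat size_flat -cardE cA /=.
  have -> : t.-1 * i + 1 - t = t.-1 * (i - 1) by case: (t) ht0 => // t' _; rewrite /= mulnBr muln1 addn1 subSS; lia.
  have hq : 0 < q by lia.
  have h : t.-1 * q <= i * n by case: (t) ht0 ht2 => // t' _; rewrite mulSn /=; lia.
  have e1 : t.-1 * (i - 1) * q = (i - 1) * (t.-1 * q) by rewrite mulnAC mulnC.
  have e2 : i * (i - 1) * n = (i - 1) * (i * n) by rewrite (mulnC i) mulnA.
  by rewrite e1 e2 leq_mul2l h orbT.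
Qed.

Lemma bound (q i N : nat) (C : {set N.-tuple 'I_q}) (L : nat) :
  1 <= i <= q -> 0 < N -> list_decodable C L (q - i) q (i * (i - 1)) q ->
  #|C| <= #|{: {set 'I_q} * 'I_q}| * L.
Proof.
move=> /andP[hi hiq] hN hLD.
have hq : 0 < q by lia.
pose s0 : 'I_q := Ordinal hq.
have ex : forall x : N.-tuple 'I_q, exists p, keyb i x p.
  move=> x; have [A [cA hA]] := @exA q x i hiq.
  exists (A, last s0 (filter (mem A) x)); rewrite /keyb /= cA eqxx hA /=.
  have hf : 0 < size (filter (mem A) x).
    rewrite size_filter size_tuple in hA *; rewrite lt0n; apply/negP => /eqP E.
    by rewrite E in hA; nia.
  apply/eqP; move: hf; case: (filter _ _) => //.
pose f (x : N.-tuple 'I_q) := odflt (set0, s0) [pick p | keyb i x p].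
have hf : forall x : N.-tuple 'I_q, keyb i x (f x).
  move=> x; rewrite /f; case: pickP => [p -> //|H].
  by have [p hp] := ex x; rewrite H in hp.
rewrite -sum1_card (partition_big f predT) //=.
rewrite -[X in _ <= X * L]sum1_card big_distrl /=.
apply: leq_sum => p _; rewrite mul1n.
rewrite (eq_bigl (fun c => c \in [set c in C | f c == p])); last by move=> c; rewrite inE.
rewrite sum1_card; apply: (hLD (yy (tt_ q i N) p.1 p.2)).
  by apply/subsetP => c; rewrite inE => /andP[].
move=> c; rewrite inE => /andP[_ /eqP E].
have := hf c; rewrite E; case: p E => A s E h.
by apply: obt => //; [rewrite hi hiq | rewrite size_tuple].
Qed.

Unset Implicit Arguments.
Theorem theorem5p1 (q i : nat) (hq : 2 <= q) (hi1 : 1 <= i) (hiq : i <= q)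
  (n : nat -> nat) (C : forall k : nat, {set (n k).-tuple 'I_q}) (L : nat -> nat)
  (hn : forall k, n k < n k.+1)
  (hrate : exists r : nat, 0 < r /\ forall k, q ^ (n k) <= #|C k| ^ r)
  (hL : forall m : nat, 0 < m -> exists K, forall k, K <= k -> L k ^ m <= 2 ^ (n k)) :
  ~ (forall k, list_decodable (C k) (L k) (q - i) q (i * (i - 1)) q).
Proof.
move=> hLD.
have [r [hr hR]] := hrate.
have [K hK] := hL (r + r) ltac:(lia).
pose K0 := #|{: {set 'I_q} * 'I_q}|.
pose k := (maxn K (K0 ^ (r + r))).+1.
have hnk : forall j, j <= n j.
  by elim=> // j IH; apply: leq_trans (hn j).
have hk : K <= k by rewrite /k leqW // leq_maxl.
have hnp : 0 < n k by apply: leq_trans (hnk k).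
have hi : 1 <= i <= q by rewrite hi1 hiq.
have hb := bound hi hnp (hLD k).
have h1 : q ^ n k <= (K0 * L k) ^ r by apply: leq_trans (hR k) _; rewrite leq_exp2r.
set N := n k in h1 hnp hk; set l := L k in h1 hb.
have h2 : l ^ (r + r) <= 2 ^ N by apply: hK.
have h3 : q ^ N * q ^ N <= K0 ^ (r + r) * 2 ^ N.
  apply: leq_trans (leq_mul h1 h1) _.
  rewrite -expnD expnMn; apply: leq_mul => //.
have h4 : 2 ^ N * 2 ^ N <= q ^ N * q ^ N by apply: leq_mul; rewrite leq_exp2r.
have h5 : 2 ^ N <= K0 ^ (r + r).
  by rewrite -(leq_pmul2r (expn_gt0 2 N)); apply: leq_trans h4 h3.
have h6 : N < 2 ^ N by apply: ltn_expl.
have h7 : K0 ^ (r + r) < k by rewrite /k ltnS leq_maxr.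
have := hnk k; rewrite -/N; lia.
Qed.
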